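(* Let $G$ be a flat affine group scheme over $R$, let $\mathfrak a\subset R[G]$ be its augmentation ideal, and let $N\to G$ be the automatic blowup of the identity. Then $R[N]$ is the $R[G]$-subalgebra of $K[G]$ generated by $\bigcup_{n\ge0}\pi^{-n}\mathfrak a$, and the set $\bigcup_{n\ge0}\pi^{-n}\mathfrak a$ generates the augmentation ideal of $R[N]$.
   Context: $R$ is a discrete valuation ring with uniformizer $\pi$, fraction field $K$, residue field $k$; $R[G]\subset K[G]$ for flat $G$. The Neron blowup of a flat affine group scheme $H$ at a closed subgroup of $H\otimes k$ with ideal $J\subset R[H]$ (inverse image of its ideal) is $\mathrm{Spec}$ of the subring of $K[H]$ generated by $R[H]$ and $\pi^{-1}J$. The automatic blowup of the identity $N\to G$ is the limit of $\cdots\to G_{n+1}\to G_n\to\cdots\to G_0=G$, where $G_{n+1}\to G_n$ is the Neron blowup of $G_n$ at the trivial subgroup $\{e\}\subset G_n\otimes k$; thus $R[N]=\bigcup_n R[G_n]\subset K[G]$. *)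

(* Defs.v *)
From HB Require Import structures.
From mathcomp Require Import all_boot all_order all_algebra.
Set Implicit Arguments. Unset Strict Implicit. Unset Printing Implicit Defensive.
Import Order.TTheory GRing.Theory Num.Theory.
Local Open Scope ring_scope.

Definition is_subring (A : nzRingType) (S : A -> Prop) : Prop :=
  [/\ S 1, (forall x y, S x -> S y -> S (x - y)) & (forall x y, S x -> S y -> S (x * y))].

Definition gen_subring (A : nzRingType) (S : A -> Prop) : A -> Prop :=
  fun x => forall T : A -> Prop, is_subring T -> (forall y, S y -> T y) -> T x.

Definition is_ideal_of (A : comNzRingType) (Rg I : A -> Prop) : Prop :=
  [/\ (forall x, I x -> Rg x), I 0, (forall x y, I x -> I y -> I (x + y))
    & (forall r x, Rg r -> I x -> I (r * x))].

Definition gen_ideal (A : comNzRingType) (Rg S : A -> Prop) : A -> Prop :=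
  fun x => forall I : A -> Prop, is_ideal_of Rg I -> (forall y, S y -> I y) -> I x.

Definition is_dvr (K : fieldType) (R : K -> Prop) (pi : K) : Prop :=
  [/\ is_subring R, R pi, pi != 0, ~ R pi^-1
    & forall x : K, x != 0 ->
        exists (u : K) (n : int), [/\ R u, u != 0, R u^-1 & x = u * pi ^ n]].

(* Model of a flat affine group scheme G over R: A = K[G] (a commutative
   K-algebra), B = R[G] the R-form inside A (an R-subalgebra with
   K.B = A, i.e. A = B[1/pi]; flatness = torsion-freeness is automatic
   since B sits inside the K-vector space A), and eps : K[G] -> K the
   (K-linear) counit, mapping R[G] into R. *)
Definition is_R_form (K : fieldType) (R : K -> Prop) (pi : K)
    (A : comAlgType K) (eps : {rmorphism A -> K}) (B : A -> Prop) : Prop :=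
  [/\ is_subring B,
      (forall r x, R r -> B x -> B (r *: x)),
      (forall a : A, exists (n : nat) (b : A), B b /\ a = pi ^- n *: b),
      (forall (c : K) (a : A), eps (c *: a) = c * eps a)
    & (forall b, B b -> R (eps b))].

Definition aug_ideal (K : fieldType) (A : comAlgType K)
    (eps : {rmorphism A -> K}) (S : A -> Prop) : A -> Prop :=
  fun x => S x /\ eps x = 0.

(* Neron blowup of the R-form S at the trivial subgroup {e} of the special
   fibre: J = inverse image in S of the ideal of {e} in S (x) k, i.e.
   J = { f in S | eps f in pi R }, and the blowup is the subring of K[G]
   generated by S and pi^-1 J. *)
Definition neron_blowup_id (K : fieldType) (R : K -> Prop) (pi : K)
    (A : comAlgType K) (eps : {rmorphism A -> K}) (S : A -> Prop) : A -> Prop :=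
  gen_subring (fun x => S x \/
     exists f, [/\ S f, (exists r, R r /\ eps f = pi * r) & x = pi^-1 *: f]).

Definition blowup_stage (K : fieldType) (R : K -> Prop) (pi : K)
    (A : comAlgType K) (eps : {rmorphism A -> K}) (B : A -> Prop) (n : nat)
    : A -> Prop :=
  iter n (neron_blowup_id R pi eps) B.

Definition automatic_blowup (K : fieldType) (R : K -> Prop) (pi : K)
    (A : comAlgType K) (eps : {rmorphism A -> K}) (B : A -> Prop) : A -> Prop :=
  fun x => exists n, blowup_stage R pi eps B n x.

(* Main.v *)
Require Import Defs.
From HB Require Import structures.
From mathcomp Require Import all_boot all_order all_algebra.
Import GRing.Theory.
Local Open Scope ring_scope.

Lemma sr0 (A : nzRingType) (S : A -> Prop) : is_subring S -> S 0.
Proof. by case=> h1 hB _; rewrite -(subrr 1); apply: hB. Qed.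
Lemma srN (A : nzRingType) (S : A -> Prop) x : is_subring S -> S x -> S (- x).
Proof. move=> hS hx; rewrite -sub0r; case: (hS)=> _ hB _; apply: hB=> //; exact: sr0. Qed.
Lemma srD (A : nzRingType) (S : A -> Prop) x y : is_subring S -> S x -> S y -> S (x + y).
Proof. move=> hS hx hy; rewrite -[y]opprK; case: (hS)=> _ hB _; apply: hB=> //; exact: srN. Qed.
Lemma gen_sr (A : nzRingType) (S : A -> Prop) : is_subring (gen_subring S).
Proof.
split.
- by move=> T [h1 _ _] _.
- move=> x y hx hy T hT hST; case: (hT)=> _ hB _; apply: hB; [exact: hx|exact: hy].
- move=> x y hx hy T hT hST; case: (hT)=> _ _ hM; apply: hM; [exact: hx|exact: hy].
Qed.

Theorem proposition2p20 (K : fieldType) (R : K -> Prop) (pi : K)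
    (A : comAlgType K) (eps : {rmorphism A -> K}) (B : A -> Prop) :
  is_dvr R pi -> is_R_form R pi eps B ->
  let U : A -> Prop := fun x =>
    exists (n : nat) (a : A), aug_ideal eps B a /\ x = pi ^- n *: a in
  (forall x, automatic_blowup R pi eps B x <->
             gen_subring (fun y => B y \/ U y) x) /\
  (forall x, aug_ideal eps (automatic_blowup R pi eps B) x <->
             gen_ideal (automatic_blowup R pi eps B) U x).
Proof.
case=> hR Rpi pi0 _ _ [hB Bsc _ epsZ epsB] U.
have Rexp : forall n, R (pi ^+ n).
  elim=> [|n IH]; first by case: hR.
  by rewrite exprS; case: hR=> _ _ hM; apply: hM.
have Ueps : forall u, U u -> eps u = 0.
  by move=> u [n [a [[_ ha] ->]]]; rewrite epsZ ha mulr0.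
have UB : forall b, B b -> eps b = 0 -> U b.
  by move=> b hb he; exists 0%N, b; split=> //; rewrite expr0 invr1 scale1r.
have UD : forall u v, U u -> U v -> U (u + v).
  move=> u v [n [a [[ha ea] ->]]] [m [a' [[ha' ea'] ->]]].
  exists (n + m)%N, (pi ^+ m *: a + pi ^+ n *: a'); split.
    split; first by apply: (srD)=> //; apply: (Bsc).
    by rewrite rmorphD !epsZ ea ea' !mulr0 addr0.
  have pn : pi ^+ n != 0 by rewrite expf_neq0.
  have pm : pi ^+ m != 0 by rewrite expf_neq0.
  rewrite scalerDr !scalerA exprD invfM; congr (_ *: _ + _ *: _).
    by rewrite -mulrA mulVf ?mulr1.
  by rewrite mulrAC mulVf ?mul1r.
have UMB : forall b u, B b -> U u -> U (b * u).
  move=> b u hb [n [a [[ha ea] ->]]]; exists n, (b * a); split.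
    by split; [case: hB=> _ _; apply|rewrite rmorphM ea mulr0].
  by rewrite scalerAr.
have UMU : forall u v, U u -> U v -> U (u * v).
  move=> u v [n [a [[ha ea] ->]]] [m [a' [[ha' ea'] ->]]].
  exists (n + m)%N, (a * a'); split.
    by split; [case: hB=> _ _; apply|rewrite rmorphM ea mul0r].
  by rewrite -scalerAl -scalerAr scalerA exprD invfM.
have U0 : U 0 by apply: (UB); [exact: sr0|exact: rmorph0].
have UN : forall u, U u -> U (- u).
  move=> u [n [a [[ha ea] ->]]]; exists n, (- a); split; last by rewrite scalerN.
  by split; [exact: srN|rewrite rmorphN ea oppr0].
pose T x := exists b u, [/\ B b, U u & x = b + u].
have TB : forall b, B b -> T b by move=> b hb; exists b, 0; rewrite addr0.
have TU : forall u, U u -> T u.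
  by move=> u hu; exists 0, u; rewrite add0r; split=> //; exact: sr0.
have Tsr : is_subring T.
  split.
  - by apply: (TB); case: hB.
  - move=> x y [b [u [hb hu ->]]] [b' [u' [hb' hu' ->]]].
    exists (b - b'), (u - u'); split.
    + by case: hB=> _ h _; apply: h.
    + by apply: (UD)=> //; apply: (UN).
    + by rewrite opprD addrACA.
  - move=> x y [b [u [hb hu ->]]] [b' [u' [hb' hu' ->]]].
    exists (b * b'), (b * u' + u * b' + u * u'); split.
    + by case: hB=> _ _ h; apply: h.
    + apply: (UD); [apply: (UD)|exact: (UMU)]; first exact: (UMB).
      by rewrite mulrC; apply: (UMB).
    + by rewrite mulrDl !mulrDr !addrA.
have Upi : forall u, U u -> U (pi^-1 *: u).
  move=> u [n [a [ha ->]]]; exists n.+1, a; split=> //.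
  by rewrite scalerA exprS invfM.
pose st := blowup_stage R pi eps B.
have st_sr : forall n, is_subring (st n).
  by case=> [|n] //; exact: gen_sr.
have st_succ : forall n x, st n x -> st n.+1 x.
  by move=> n x hx; rewrite /st /blowup_stage iterS => S hS hSS; apply: hSS; left.
have st_mono : forall n k x, st n x -> st (k + n)%N x.
  by move=> n; elim=> [|k IH] x hx //; rewrite addSn; apply: (st_succ); apply: (IH).
have stB : forall n b, B b -> st n b.
  by move=> n b hb; rewrite -[n]addn0; apply: (st_mono).
have stU : forall a, B a -> eps a = 0 -> forall n, st n (pi ^- n *: a).
  move=> a ha ea; elim=> [|n IH]; first by rewrite expr0 invr1 scale1r.
  rewrite /st /blowup_stage iterS => S hS hSS; apply: hSS; right.
  exists (pi ^- n *: a); split=> //.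
    exists 0; split; first exact: sr0.
    by rewrite epsZ ea !mulr0.
  by rewrite scalerA exprS invfM.
pose N := automatic_blowup R pi eps B.
have Nsr : is_subring N.
  split.
  - by exists 0%N; case: hB.
  - move=> x y [n hx] [m hy]; exists (m + n)%N.
    case: (st_sr (m + n)%N)=> _ h _; apply: h; first exact: (st_mono).
    by rewrite addnC; apply: (st_mono).
  - move=> x y [n hx] [m hy]; exists (m + n)%N.
    case: (st_sr (m + n)%N)=> _ _ h; apply: h; first exact: (st_mono).
    by rewrite addnC; apply: (st_mono).
have NU : forall u, U u -> N u.
  by move=> u [n [a [[ha ea] ->]]]; exists n; apply: (stU).
have NT : forall x, N x -> T x.
  move=> x [n]; elim: n x=> [|n IH] x; first exact: (TB).
  rewrite /blowup_stage iterS => hx; apply: hx=> //.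
  move=> y [/IH //|[f [hf [r [hr er]] ->]]].
  case: (IH f hf)=> b [u [hb hu ef]].
  have eb : eps b = pi * r by rewrite -er ef rmorphD (Ueps u hu) addr0.
  exists (r *: 1), (pi^-1 *: (b - (pi * r) *: 1) + pi^-1 *: u); split.
  - by apply: (Bsc)=> //; case: hB.
  - apply: (UD); last exact: (Upi).
    apply: (Upi); apply: (UB).
      case: hB=> h1 hsub _; apply: hsub=> //; apply: (Bsc)=> //.
      by case: hR=> _ _; apply.
    by rewrite rmorphB epsZ rmorph1 mulr1 eb subrr.
  - rewrite ef scalerDr scalerBr scalerA mulKf //.
    by rewrite addrA [r *: 1 + _]addrC subrK.
have TN : forall x, T x -> N x.
  by move=> x [b [u [hb hu ->]]]; apply: (srD)=> //; [exists 0%N|exact: (NU)].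
split.
- move=> x; split.
  + move=> /NT [b [u [hb hu ->]]] S hS hSS.
    by apply: (srD)=> //; apply: hSS; [left|right].
  + move=> hx; apply: (TN); apply: hx=> //.
    by move=> y [/TB|/TU].
- move=> x; split.
  + move=> [/NT [b [u [hb hu ex]]] e0] I hI hUI; apply: hUI.
    rewrite ex; apply: (UD)=> //; apply: (UB)=> //.
    by move: e0; rewrite ex rmorphD (Ueps u hu) addr0.
  + move=> hx; have hUx : U x.
      apply: hx=> //; split=> //.
      move=> r y /NT [b [u [hb hu ->]]] hy.
      by rewrite mulrDl; apply: (UD); [apply: (UMB)|apply: (UMU)].
    by split; [apply: (NU)|apply: (Ueps)].
Qed.
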